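(* The semantics $\mathit{cf2}$ and $\mathit{stg2}$ satisfy the weak reinstatement criterion: for every argumentation framework $\mathcal{F}$ and every $S\in\mathit{cf2}(\mathcal{F})$ or $S\in\mathit{stg2}(\mathcal{F})$, $S$ contains the grounded extension of $\mathcal{F}$.
   Context: An argumentation framework (AF) is $\mathcal{F}=(A_{\mathcal{F}},R_{\mathcal{F}})$ with $R_{\mathcal{F}}\subseteq A_{\mathcal{F}}\times A_{\mathcal{F}}$ (possibly infinite); $a\rightarrow b$ means $(a,b)\in R_{\mathcal{F}}$. $S$ defends $a$ if every attacker of $a$ is attacked by some element of $S$; the grounded extension is the least fixed point of $S\mapsto\{x:S\text{ defends }x\}$. $\mathcal{F}|_B=(A_{\mathcal{F}}\cap B,R_{\mathcal{F}}\cap(B\times B))$. Conflict-free: no $a,b\in S$ with $a\rightarrow b$; naive: $\subseteq$-maximal conflict-free; $S^\oplus=S\cup\{x:\exists y\in S,\ y\rightarrow x\}$; stage: conflict-free $S$ with no conflict-free $T$ having $S^\oplus\subsetneq T^\oplus$. $\mathrm{SCC}(\mathcal{F})$: strongly connected components of the attack graph. $D_S(X)=\{b\in X:\exists a\in S\setminus X,\ a\rightarrow b\}$. $S\in\mathit{cf2}(\mathcal{F})$ iff either $|\mathrm{SCC}(\mathcal{F})|=1$ and $S$ is naive in $\mathcal{F}$, or $|\mathrm{SCC}(\mathcal{F})|\ne 1$ and for each $X\in\mathrm{SCC}(\mathcal{F})$, $S\cap X\in\mathit{cf2}(\mathcal{F}|_{X\setminus D_S(X)})$ (recursively). For infinite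 AFs the recursion may be ill-founded; $S$ is counted as a member of $\mathit{cf2}(\mathcal{F})$ only when the tree of recursive calls has no infinite branch and the condition holds at every leaf. $\mathit{stg2}$ is the same with stage in place of naive. *)

(* Defs.v *)
(* Possibly infinite argumentation frameworks over an
   arbitrary carrier type A; sets are predicates A -> Prop. *)
From Stdlib Require Import Relations.

Set Implicit Arguments.

Record AF (A : Type) := mkAF {
  args : A -> Prop;
  att  : A -> A -> Prop
}.
Arguments mkAF {A}.
Arguments args {A}.
Arguments att {A}.

Section AFDefs.
Variable A : Type.
Implicit Types (F : AF A) (S T X B : A -> Prop).

Definition wf_AF F : Prop := forall a b, att F a b -> args F a /\ args F b.

Definition subset S T : Prop := forall x, S x -> T x.
Definition set_eq S T : Prop := forall x, S x <-> T x.
Definition proper_subset S T : Prop := subset S T /\ ~ subset T S.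

Definition defends F S (a : A) : Prop :=
  forall b, att F b a -> exists c, S c /\ att F c b.

Definition charf F S : A -> Prop := fun x => args F x /\ defends F S x.

Definition grounded F G : Prop :=
  set_eq (charf F G) G /\
  (forall T, set_eq (charf F T) T -> subset G T).

Definition restrict F B : AF A :=
  mkAF (fun x => args F x /\ B x) (fun a b => att F a b /\ B a /\ B b).

Definition conflict_free F S : Prop :=
  subset S (args F) /\ forall a b, S a -> S b -> ~ att F a b.

Definition naive F S : Prop :=
  conflict_free F S /\
  forall T, conflict_free F T -> subset S T -> subset T S.

Definition range F S : A -> Prop :=
  fun x => S x \/ exists y, S y /\ att F y x.

Definition stage F S : Prop :=
  conflict_free F S /\
  ~ (exists T, conflict_free F T /\ proper_subset (range F S) (range F T)).

Definition reach F : A -> A -> Prop := clos_refl_trans A (att F).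

Definition is_scc F X : Prop :=
  exists a, args F a /\
    forall b, X b <-> (args F b /\ reach F a b /\ reach F b a).

Definition one_scc F : Prop :=
  exists X, is_scc F X /\ forall Y, is_scc F Y -> set_eq Y X.

Definition Dset F S X : A -> Prop :=
  fun b => X b /\ exists a, S a /\ ~ X a /\ att F a b.

(* Being an inductive
   predicate, membership requires a well-founded derivation tree
   (no infinite branch of recursive calls), with the base condition
   at every leaf. *)
Inductive scc_rec (base : AF A -> (A -> Prop) -> Prop)
  : AF A -> (A -> Prop) -> Prop :=
| scc_rec_base : forall F S,
    one_scc F -> base F S -> scc_rec base F S
| scc_rec_step : forall F S,
    ~ one_scc F ->
    subset S (args F) ->
    (forall X, is_scc F X ->
       scc_rec base (restrict F (fun x => X x /\ ~ Dset F S X x))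
                    (fun x => S x /\ X x)) ->
    scc_rec base F S.

Definition cf2 F S : Prop := scc_rec naive F S.
Definition stg2 F S : Prop := scc_rec stage F S.

End AFDefs.

(* Main.v *)
Require Import Defs.
From Stdlib Require Import Relations Classical.

Lemma defends_mono (A : Type) (F : AF A) (T U : A -> Prop) x :
  subset T U -> defends F T x -> defends F U x.
Proof.
  intros H D b Hb. destruct (D b Hb) as [c [Hc Hcb]]. exists c; split; auto.
Qed.

Lemma charf_mono (A : Type) (F : AF A) (T U : A -> Prop) :
  subset T U -> subset (charf F T) (charf F U).
Proof.
  intros H x [Ha Hd]. split; auto. eapply defends_mono; eauto.
Qed.

Lemma grounded_ind (A : Type) (F : AF A) (G P : A -> Prop) :
  grounded F G ->
  (forall x, args F x -> defends F (fun y => G y /\ P y) x -> G x -> P x) ->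
  subset G P.
Proof.
  intros [HGfix HGmin] Hind.
  set (K := fun x => forall T, subset (charf F T) T -> T x).
  assert (H1 : subset (charf F K) K).
  { intros x Hx T HT. apply HT. eapply charf_mono; [|exact Hx].
    intros y Ky. apply Ky. exact HT. }
  assert (HK : set_eq (charf F K) K).
  { intro x; split; [apply H1|]. intro Kx. apply Kx.
    apply charf_mono. exact H1. }
  assert (GK : subset G K) by (apply HGmin; exact HK).
  assert (Hpre : subset (charf F (fun y => G y /\ P y)) (fun y => G y /\ P y)).
  { intros y [Hay Hdy].
    assert (Gy : G y).
    { apply (proj1 (HGfix y)). split; auto.
      eapply defends_mono; [|exact Hdy]. intros w [Hw _]; exact Hw. }
    split; auto. }
  intros x Gx. exact (proj2 (GK x Gx _ Hpre)).
Qed.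

Lemma G_cf (A : Type) (F : AF A) (G : A -> Prop) :
  grounded F G -> forall b x, G b -> G x -> ~ att F b x.
Proof.
  intros HG.
  assert (H : subset G (fun x => forall b, G b -> ~ att F b x)).
  { apply (@grounded_ind A F G); auto.
    intros x Hx Hdef Gx b Gb Hbx.
    destruct (Hdef b Hbx) as [c [[Gc Pc] Hcb]].
    destruct HG as [HGfix _].
    destruct (proj2 (HGfix b) Gb) as [_ Hdb].
    destruct (Hdb c Hcb) as [d [Gd Hdc]].
    exact (Pc d Gd Hdc). }
  intros b x Gb Gx. exact (H x Gx b Gb).
Qed.

Lemma scc_cf (A : Type) (base : AF A -> (A -> Prop) -> Prop)
  (Hcf : forall F S, base F S -> conflict_free F S) F S :
  scc_rec base F S -> conflict_free F S.
Proof.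
  induction 1 as [F S Hone Hb | F S Hn Hsub Hch IH].
  - auto.
  - split; [exact Hsub|]. intros a b Ha Hb Hab.
    set (X := fun y => args F y /\ reach F b y /\ reach F y b).
    assert (HX : is_scc F X).
    { exists b. split. apply Hsub; auto. intros; unfold X; tauto. }
    destruct (IH X HX) as [Hs Hc].
    assert (Xb : X b) by (split; [apply Hsub; auto| split; apply rt_refl]).
    assert (Hbc := Hs b (conj Hb Xb)).
    destruct Hbc as [_ [_ HnD]].
    destruct (classic (X a)) as [Xa | nXa].
    + assert (Hac := Hs a (conj Ha Xa)).
      apply (Hc a b (conj Ha Xa) (conj Hb Xb)).
      simpl. split; [exact Hab|]. split.
      * destruct Hac as [_ H]; exact H.
      * split; [exact Xb| exact HnD].
    + apply HnD. split; [exact Xb|]. exists a. auto.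
Qed.

Arguments scc_cf {A base} Hcf {F S}.
Arguments G_cf {A F G}.
Arguments grounded_ind {A F G P}.
Definition Inv (A : Type) (F : AF A) (S : A -> Prop) (F' : AF A) (S' : A -> Prop) :=
  (forall a, args F' a -> args F a) /\
  (forall a b, att F' a b <-> (att F a b /\ args F' a /\ args F' b)) /\
  subset S' S /\
  (forall a, S a -> args F' a -> S' a) /\
  (forall c z, S c -> att F c z -> args F' z -> args F' c).

Arguments Inv {A}.
Lemma rt_last (A : Type) (R : A -> A -> Prop) y x :
  clos_refl_trans A R y x -> y <> x -> exists z, R z x.
Proof.
  intros H ne. apply clos_rt_rtn1 in H. inversion H; subst.
  - contradiction.
  - eauto.
Qed.

Arguments rt_last {A R y x}.
Lemma main (A : Type) (base : AF A -> (A -> Prop) -> Prop)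
  (Hcf : forall F S, base F S -> conflict_free F S)
  (Hsing : forall F S x, base F S -> args F x -> (forall y, args F y -> y = x) ->
      ~ att F x x -> S x)
  (F : AF A) (G S : A -> Prop) :
  wf_AF F -> grounded F G -> scc_rec base F S -> subset G S.
Proof.
  intros Hwf HG Hrec.
  destruct (scc_cf Hcf Hrec) as [_ Scf].
  pose proof (G_cf HG) as Gcf.
  assert (GA : forall x, G x -> args F x).
  { intros x Gx. destruct HG as [HGfix _]. exact (proj1 (proj2 (HGfix x) Gx)). }
  assert (InvTop : Inv F S F S).
  { split; [auto|]. split; [intros a b; split; [intro H; split; [auto| apply Hwf; auto]| tauto]|].
    split; [intros a h; auto|]. split; [auto|].
    intros c z _ Hcz _. apply (Hwf c z Hcz). }
  assert (Hall : subset G (fun x => forall F' S', scc_rec base F' S' -> Inv F S F' S' ->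
     args F' x -> S' x /\ (one_scc F' -> forall y, args F' y -> y = x))).
  { apply grounded_ind with (1 := HG). intros x Hx Hdef HGx F' S' Hr.
    assert (HPS : forall c, G c /\ (forall F' S', scc_rec base F' S' -> Inv F S F' S' ->
       args F' c -> S' c /\ (one_scc F' -> forall y, args F' y -> y = c)) -> S c).
    { intros c [Gc Pc]. exact (proj1 (Pc F S Hrec InvTop (GA c Gc))). }
    induction Hr as [F' S' Hone Hb | F' S' Hn Hsub Hch IH]; intros Hinv Hx'.
    - pose proof Hinv as Hinv0. destruct Hinv as [I1 [I2 [I3 [I4 I5]]]].
      assert (Honly : forall y, args F' y -> y = x).
      { intros y Hy. destruct (classic (y = x)) as [e|ne]; [exact e|exfalso].
        pose proof Hone as Hone'.
        destruct Hone as [X [HX Hall']].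
        set (Xx := fun w => args F' w /\ reach F' x w /\ reach F' w x).
        set (Xy := fun w => args F' w /\ reach F' y w /\ reach F' w y).
        assert (HXx : is_scc F' Xx) by (exists x; split; auto; intros; unfold Xx; tauto).
        assert (HXy : is_scc F' Xy) by (exists y; split; auto; intros; unfold Xy; tauto).
        assert (Xyy : Xy y) by (split; [auto| split; apply rt_refl]).
        assert (Xxy : Xx y) by (apply (Hall' Xx HXx); apply (Hall' Xy HXy); exact Xyy).
        destruct Xxy as [_ [_ Ryx]].
        destruct (rt_last Ryx ne) as [z Hzx].
        apply I2 in Hzx. destruct Hzx as [Hzx [Hz _]].
        destruct (Hdef z Hzx) as [c [Hc Hcz]].
        assert (Sc := HPS c Hc).
        assert (Hc' := I5 c z Sc Hcz Hz).
        destruct Hc as [Gc Pc].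
        destruct (Pc F' S' (@scc_rec_base A base F' S' Hone' Hb) Hinv0 Hc') as [_ Hon].
        assert (E1 := Hon Hone' x Hx'). assert (E2 := Hon Hone' y Hy).
        apply ne. congruence. }
      split; [|intros; apply Honly; auto].
      apply (Hsing F' S' x Hb Hx' Honly).
      intro Hxx. apply I2 in Hxx. exact (Gcf x x HGx HGx (proj1 Hxx)).
    - split; [|intro H; contradiction].
      destruct Hinv as [I1 [I2 [I3 [I4 I5]]]].
      set (X := fun w => args F' w /\ reach F' x w /\ reach F' w x).
      assert (HX : is_scc F' X) by (exists x; split; auto; intros; unfold X; tauto).
      assert (Xx : X x) by (split; [auto| split; apply rt_refl]).
      assert (nD : ~ Dset F' S' X x).
      { intros [_ [a [Sa [nXa Hax]]]]. apply I2 in Hax. destruct Hax as [Hax _].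
        destruct (Hdef a Hax) as [c [Hc Hca]].
        exact (Scf c a (HPS c Hc) (I3 a Sa) Hca). }
      assert (Hinvc : Inv F S (restrict F' (fun w => X w /\ ~ Dset F' S' X w))
                              (fun w => S' w /\ X w)).
      { split; [intros a [Ha _]; auto|].
        split; [intros a b; simpl; rewrite I2; tauto|].
        split; [intros a [Ha _]; auto|].
        split; [intros a Sa [Ha [Xa _]]; auto|].
        intros c z Sc Hcz [Hz [Xz nDz]].
        assert (Hc : args F' c) by (apply (I5 c z); auto).
        assert (Xc : X c).
        { destruct (classic (X c)) as [h|h]; [exact h|exfalso].
          apply nDz. split; [auto|]. exists c. split; [auto|]. split; [auto|].
          apply I2; auto. }
        split; [auto|]. split; [auto|].
        intros [_ [a [Sa [_ Hac]]]]. apply I2 in Hac.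
        exact (Scf a c (I3 a Sa) Sc (proj1 Hac)). }
      destruct (IH X HX Hinvc (conj Hx' (conj Xx nD))) as [[H _] _]. exact H. }
  intros x Gx. exact (proj1 (Hall x Gx F S Hrec InvTop (GA x Gx))).
Qed.

Theorem corollary1 (A : Type) (F : AF A) (G S : A -> Prop) :
  wf_AF F ->
  grounded F G ->
  (cf2 F S \/ stg2 F S) ->
  subset G S.
Proof.
  intros Hwf HG [H|H].
  - refine (@main A (@naive A) _ _ F G S Hwf HG H).
    + intros F0 S0 [h _]; exact h.
    + intros F0 S0 x [[Hsub Hc] Hmax] Hx Honly Hxx.
      assert (HT : conflict_free F0 (fun y => y = x)).
      { split. intros y ->; auto. intros a b -> ->; auto. }
      apply (Hmax _ HT). intros y Sy. apply Honly, Hsub, Sy. reflexivity.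
  - refine (@main A (@stage A) _ _ F G S Hwf HG H).
    + intros F0 S0 [h _]; exact h.
    + intros F0 S0 x [[Hsub Hc] Hst] Hx Honly Hxx.
      destruct (classic (S0 x)) as [h|h]; [exact h|exfalso].
      apply Hst. exists (fun y => y = x). split.
      { split. intros y ->; auto. intros a b -> ->; auto. }
      split.
      * intros y [Sy | [w [Sw Hwy]]].
        -- left. apply Honly, Hsub, Sy.
        -- right. exists w. split; [apply Honly, Hsub, Sw | exact Hwy].
      * intro Hs. destruct (Hs x (or_introl eq_refl)) as [Sx | [w [Sw Hwx]]].
        -- exact (h Sx).
        -- assert (w = x) by (apply Honly, Hsub, Sw). subst. exact (h Sw).
Qed.
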